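(* Let $M$ be a finite rectangular monoid generated by regular elements, and let $e,f\in E(M)$. (1) If $MeM$ and $MfM$ are incomparable, then every $m\in\mathrm{AIrr}_{\mathscr K(M)}(e,f)=\mathrm{Irr}_{\mathscr K(M)}(e,f)$ is of the form $ba$ with $Ma=Me$ and $bM=fM$. (2) If $MeM\subsetneq MfM$, then $\mathrm{AIrr}_{\mathscr K(M)}(e,f)=\{m\in fMe: Mm=Me\}$. (3) If $MeM\supsetneq MfM$, then $\mathrm{AIrr}_{\mathscr K(M)}(e,f)=\{m\in fMe: mM=fM\}$. (4) $\mathrm{AIrr}_{\mathscr K(M)}(e,e)=G_e$.
   Context: $E(M)$ idempotents; $M$ rectangular: each $\{g\in E(M): MgM=MeM\}$ closed under multiplication. $m$ is regular if $m\in mMm$. The Karoubi envelope $\mathscr K(M)$ has objects $E(M)$, morphisms $e\to f$ the elements of $fMe$, composition the product. A morphism $m$ is almost irreducible if whenever $m=gh$ in $\mathscr K(M)$, $h$ is a split monomorphism or $g$ is a split epimorphism; irreducible if in addition it is neither a split monomorphism nor a split epimorphism. $\mathrm{AIrr}_{\mathscr K(M)}(e,f)$, $\mathrm{Irr}_{\mathscr K(M)}(e,f)$ denote these sets. $G_e$ is the group of units of $eMe$. *)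

(* Defs.v *)
From mathcomp Require Import all_boot.
Set Implicit Arguments. Unset Strict Implicit. Unset Printing Implicit Defensive.

Record finMonoid := FinMonoid {
  carrier :> finType;
  mmul : carrier -> carrier -> carrier;
  mone : carrier;
  mmulA : forall x y z, mmul x (mmul y z) = mmul (mmul x y) z;
  mmul1m : forall x, mmul mone x = x;
  mmulm1 : forall x, mmul x mone = x }.

Section Defs.
Variable M : finMonoid.
Local Notation "x * y" := (mmul x y).

Definition idem (e : M) : Prop := e * e = e.
Definition regular (m : M) : bool := [exists x : M, m == m * x * m].
Definition lideal (a : M) : {set M} := [set u * a | u : M].
Definition rideal (a : M) : {set M} := [set a * u | u : M].
Definition jideal (a : M) : {set M} := [set u * a * v | u : M, v : M].

Definition rectangular : Prop :=
  forall e g h : M, idem e -> idem g -> idem h ->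
    jideal g = jideal e -> jideal h = jideal e ->
    idem (g * h) /\ jideal (g * h) = jideal e.

Definition gen_by_regular : Prop :=
  forall m : M, exists s : seq M, all regular s /\ m = foldr (@mmul M) (@mone M) s.

(* hom-sets of the Karoubi envelope: morphisms e -> f are elements of fMe *)
Definition hom (e f : M) (m : M) : Prop := exists x : M, m = f * x * e.

Definition split_mono (e k h : M) : Prop := exists r, hom k e r /\ r * h = e.
Definition split_epi (k f g : M) : Prop := exists s, hom f k s /\ g * s = f.

Definition AIrr (e f m : M) : Prop :=
  hom e f m /\
  forall k g h : M, idem k -> hom k f g -> hom e k h -> m = g * h ->
    split_mono e k h \/ split_epi k f g.
Definition Irr (e f m : M) : Prop :=
  AIrr e f m /\ ~ split_mono e f m /\ ~ split_epi e f m.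

Definition Ge (e m : M) : Prop :=
  hom e e m /\ exists x, hom e e x /\ m * x = e /\ x * m = e.
End Defs.

(* Main.v *)
Require Import Defs.
From mathcomp Require Import all_boot zify.
Set Implicit Arguments. Unset Strict Implicit. Unset Printing Implicit Defensive.
Local Notation "x ** y" := (mmul x y) (at level 40, left associativity).


Fixpoint pw (M : finMonoid) (z : M) (n : nat) : M :=
  if n is n'.+1 then z ** pw z n' else mone M.

Lemma pw_add (M : finMonoid) (z : M) m n : pw z (m + n) = pw z m ** pw z n.
Proof. elim: m => [|m IH] /=; first by rewrite mmul1m. by rewrite IH mmulA. Qed.

Lemma pwSr (M : finMonoid) (z : M) n : pw z n.+1 = pw z n ** z.
Proof. by rewrite -addn1 pw_add /= mmulm1. Qed.

Lemma idem_pow (M : finMonoid) (z : M) : exists n, 0 < n /\ pw z n ** pw z n = pw z n.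
Proof.
pose F := fun i : 'I_(#|M|.+1) => pw z i.
have : ~~ injectiveb F.
  apply/negP => /injectiveP inj. have := @leq_card _ _ F inj. by rewrite card_ord ltnn.
move/injectivePn => [i [j nij Eij]].
have {nij Eij} [a [b [ab Eab]]] : exists a b, a < b /\ pw z a = pw z b.
  move/eqP: Eij; rewrite /F => Eij.
  case: (ltngtP i j) => [lt|lt|eq].
  - by exists i, j; split => //; apply/eqP.
  - by exists j, i; split => //; apply/esym/eqP.
  - by move/eqP: nij; case; apply: val_inj.
set p := b - a.
have shift : forall k, a <= k -> pw z (k + p) = pw z k.
  move=> k ak. have -> : k + p = (k - a) + b by rewrite /p; lia.
  by rewrite pw_add -Eab -pw_add subnK.
have iter_ : forall t k, a <= k -> pw z (k + t * p) = pw z k.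
  elim=> [|t IH] k ak; first by rewrite mul0n addn0.
  have -> : k + t.+1 * p = (k + t * p) + p by rewrite mulSn; lia.
  rewrite shift; first exact: IH. lia.
exists (a.+1 * p); split; first by rewrite /p; nia.
by rewrite -pw_add iter_ //; rewrite /p; nia.
Qed.

Definition inL (M : finMonoid) (a b : M) := exists x, a = x ** b.
Definition inR (M : finMonoid) (a b : M) := exists x, a = b ** x.
Definition inJ (M : finMonoid) (a b : M) := exists x y, a = x ** b ** y.

Lemma pw_comm (M : finMonoid) (z : M) n : z ** pw z n = pw z n ** z.
Proof. by rewrite -pwSr. Qed.

Lemma stab (M : finMonoid) (a b : M) : inL a b -> inJ b a -> inL b a.
Proof.
move=> [t Ea] [x [y Eb]].
have E : b = x ** t ** b ** y by rewrite {1}Eb Ea !mmulA.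
have P : forall n, b = pw (x ** t) n ** b ** pw y n.
  elim=> [|n IH] /=; first by rewrite mmul1m mmulm1.
  rewrite (pw_comm (x ** t)) {1}IH {1}E.
  by rewrite -!mmulA.
have [n [n0 idn]] := idem_pow (x ** t).
have Eb2 : b = pw (x ** t) n ** b.
  by rewrite {1}(P n) {2}(P n) !mmulA idn.
case: n n0 idn Eb2 => // n _ _ Eb2.
exists (pw (x ** t) n ** x). by rewrite Eb2 pwSr Ea !mmulA.
Qed.

Lemma in_lideal (M : finMonoid) (a c : M) : c \in lideal a <-> inL c a.
Proof. rewrite /lideal; split; first by case/imsetP => u _ ->; exists u.
by case=> u ->; apply/imsetP; exists u. Qed.

Lemma in_rideal (M : finMonoid) (a c : M) : c \in rideal a <-> inR c a.
Proof. rewrite /rideal; split; first by case/imsetP => u _ ->; exists u.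
by case=> u ->; apply/imsetP; exists u. Qed.

Lemma in_jideal (M : finMonoid) (a c : M) : c \in jideal a <-> inJ c a.
Proof. rewrite /jideal; split; first by case/imset2P => u v _ _ ->; exists u, v.
by case=> u [v ->]; apply/imset2P; exists u v. Qed.

Lemma inL_trans (M : finMonoid) (a b c : M) : inL a b -> inL b c -> inL a c.
Proof. by move=> [x ->] [y ->]; exists (x ** y); rewrite mmulA. Qed.
Lemma inR_trans (M : finMonoid) (a b c : M) : inR a b -> inR b c -> inR a c.
Proof. by move=> [x ->] [y ->]; exists (y ** x); rewrite mmulA. Qed.
Lemma inJ_trans (M : finMonoid) (a b c : M) : inJ a b -> inJ b c -> inJ a c.
Proof. move=> [x [x' ->]] [y [y' ->]]; exists (x ** y), (y' ** x').
by rewrite !mmulA. Qed.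
Lemma inJ_refl (M : finMonoid) (a : M) : inJ a a.
Proof. by exists (mone M), (mone M); rewrite mmul1m mmulm1. Qed.
Lemma inL_J (M : finMonoid) (a b : M) : inL a b -> inJ a b.
Proof. by move=> [x ->]; exists x, (mone M); rewrite mmulm1. Qed.
Lemma inR_J (M : finMonoid) (a b : M) : inR a b -> inJ a b.
Proof. by move=> [x ->]; exists (mone M), x; rewrite mmul1m. Qed.
Lemma inL_refl (M : finMonoid) (a : M) : inL a a.
Proof. by exists (mone M); rewrite mmul1m. Qed.
Lemma inR_refl (M : finMonoid) (a : M) : inR a a.
Proof. by exists (mone M); rewrite mmulm1. Qed.

Lemma sub_lideal (M : finMonoid) (a b : M) : lideal a \subset lideal b <-> inL a b.
Proof. split.
- by move/subsetP => /(_ a) H; apply/in_lideal/H/in_lideal/inL_refl.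
- by move=> H; apply/subsetP => c /in_lideal Hc; apply/in_lideal; apply: inL_trans H.
Qed.
Lemma sub_rideal (M : finMonoid) (a b : M) : rideal a \subset rideal b <-> inR a b.
Proof. split.
- by move/subsetP => /(_ a) H; apply/in_rideal/H/in_rideal/inR_refl.
- by move=> H; apply/subsetP => c /in_rideal Hc; apply/in_rideal; apply: inR_trans H.
Qed.
Lemma sub_jideal (M : finMonoid) (a b : M) : jideal a \subset jideal b <-> inJ a b.
Proof. split.
- by move/subsetP => /(_ a) H; apply/in_jideal/H/in_jideal/inJ_refl.
- by move=> H; apply/subsetP => c /in_jideal Hc; apply/in_jideal; apply: inJ_trans H.
Qed.

Lemma eq_lideal (M : finMonoid) (a b : M) : lideal a = lideal b <-> inL a b /\ inL b a.
Proof. split.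
- by move=> E; split; apply/sub_lideal; rewrite E.
- by case=> H1 H2; apply/eqP; rewrite eqEsubset; apply/andP; split; apply/sub_lideal.
Qed.
Lemma eq_rideal (M : finMonoid) (a b : M) : rideal a = rideal b <-> inR a b /\ inR b a.
Proof. split.
- by move=> E; split; apply/sub_rideal; rewrite E.
- by case=> H1 H2; apply/eqP; rewrite eqEsubset; apply/andP; split; apply/sub_rideal.
Qed.
Lemma eq_jideal (M : finMonoid) (a b : M) : jideal a = jideal b <-> inJ a b /\ inJ b a.
Proof. split.
- by move=> E; split; apply/sub_jideal; rewrite E.
- by case=> H1 H2; apply/eqP; rewrite eqEsubset; apply/andP; split; apply/sub_jideal.
Qed.

Definition rectJ (M : finMonoid) := forall e g h : M, idem e -> idem g -> idem h ->
  inJ g e -> inJ e g -> inJ h e -> inJ e h ->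
  idem (g ** h) /\ inJ (g ** h) e /\ inJ e (g ** h).

Lemma rectJP (M : finMonoid) : rectangular M -> rectJ M.
Proof.
move=> R e g h ie ig ih H1 H2 H3 H4.
have E1 : jideal g = jideal e by apply/eq_jideal.
have E2 : jideal h = jideal e by apply/eq_jideal.
have [i E] := R e g h ie ig ih E1 E2.
by have [? ?] := proj1 (eq_jideal _ _) E.
Qed.

Lemma left_core (M : finMonoid) (e f G H : M) : rectJ M -> idem e -> idem f ->
  inR G f -> inR f G -> inL H e -> inL e H -> inJ e f -> inL e (G ** H).
Proof.
move=> R ie if_ [x0 EG] [s Es] [x1 EH] [r Er] [a [b Eab]].
have fG : f ** G = G by rewrite EG mmulA if_.
have He : H ** e = H by rewrite EH -mmulA ie.
have uH : H ** r ** H = H by rewrite -mmulA -Er He.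
have Gv : G ** (s ** G) = G by rewrite mmulA -Es fG.
have iu : idem (H ** r) by rewrite /idem mmulA uH.
have ip : H ** r ** (H ** a ** G) = H ** a ** G by rewrite !mmulA uH.
have pq : H ** a ** G ** (s ** b ** r) = H ** r.
  transitivity (H ** (a ** (G ** s) ** b) ** r); first by rewrite !mmulA.
  by rewrite -Es -Eab He.
pose p := H ** a ** G. pose q := s ** b ** r. pose u := H ** r. pose z := q ** p.
have iz : idem z.
  rewrite /idem /z; transitivity (q ** (p ** q) ** p); first by rewrite !mmulA.
  by rewrite /p /q pq -mmulA ip.
have zv : z ** (s ** G) = z by rewrite /z /p -!mmulA !Gv.
have Jzu : inJ z u.
  exists q, p; rewrite /z /p /u /q -!mmulA.
  by rewrite [H ** (r ** _)]mmulA [H ** r ** _]mmulA uH.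
have Juz : inJ u z.
  exists p, q; rewrite /z /u -(pq) /p /q.
  have := iu; rewrite /idem -{1 2 3}pq => <-.
  by rewrite !mmulA.
have [izu [_ Jz]] := R u z u iu iz iu Jzu Juz (inJ_refl _) (inJ_refl _).
have [t Et] := stab (ex_intro _ z erefl : inL (z ** u) u) Jz.
exists (r ** t ** z ** s).
rewrite {1}Er -{1}uH.
have -> : H ** r = t ** (z ** (s ** G) ** (H ** r)) by rewrite zv.
have uH' : forall X, X ** H ** r ** H = X ** H by move=> X; rewrite -[in RHS]uH !mmulA.
by rewrite !mmulA uH'.
Qed.

Definition Mop (M : finMonoid) : finMonoid :=
  @FinMonoid M (fun x y => mmul y x) (mone M)
    (fun x y z => esym (mmulA z y x)) (fun x => mmulm1 x) (fun x => mmul1m x).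

Lemma inJ_op (M : finMonoid) (a b : M) : @inJ (Mop M) a b <-> inJ a b.
Proof. split; case=> x [y E]; exists y, x; by rewrite E /= mmulA. Qed.

Lemma rectJ_op (M : finMonoid) : rectJ M -> rectJ (Mop M).
Proof.
move=> R e g h ie ig ih /inJ_op H1 /inJ_op H2 /inJ_op H3 /inJ_op H4.
have [i [J1 J2]] := R e h g ie ih ig H3 H4 H1 H2.
by split => //; split; apply/inJ_op.
Qed.

Lemma right_core (M : finMonoid) (e f G H : M) : rectJ M -> idem e -> idem f ->
  inR G f -> inR f G -> inL H e -> inL e H -> inJ f e -> inR f (G ** H).
Proof.
move=> R ie if_ G1 G2 H1 H2 J.
exact: (@left_core (Mop M) f e H G (rectJ_op R) if_ ie H1 H2 G1 G2 (proj2 (inJ_op _ _) J)).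
Qed.

Lemma key (M : finMonoid) (e f m : M) : gen_by_regular M -> AIrr e f m ->
  exists G H, [/\ inR G f, inR f G, inL H e, inL e H & m = G ** H].
Proof.
move=> gen [[x Em0] A]; have [s0 [rs0 Ex]] := gen x.
suff K : forall (s : seq M) (G : M), all (@regular M) s -> inR G f -> inR f G ->
    m = G ** foldr (@mmul M) (mone M) s ** e ->
    exists G H, [/\ inR G f, inR f G, inL H e, inL e H & m = G ** H].
  by apply: (K s0 f rs0 (inR_refl _) (inR_refl _)); rewrite -Ex; exact: Em0.
elim=> [|r s IH] G /=.
  move=> _ G1 G2 ->; exists G, e; split => //; [exact: inL_refl| exact: inL_refl|].
  by rewrite mmulm1.
case/andP => /existsP [y /eqP Ery] rs [x0 EG] Gf Em.
have Ery' : forall X, X ** r ** y ** r = X ** r.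
  by move=> X; rewrite [in RHS]Ery !mmulA.
have ic : idem (y ** r) by rewrite /idem !mmulA Ery'.
set w := foldr _ _ s in Em IH.
have hg : hom (y ** r) f (G ** r).
  by exists (x0 ** r); rewrite EG !mmulA Ery'.
have hh : hom e (y ** r) (y ** r ** w ** e) by exists w.
have Emgh : m = G ** r ** (y ** r ** w ** e) by rewrite Em !mmulA Ery'.
case: (A _ _ _ ic hg hh Emgh) => [[r' [_ Er']]|[s' [_ Es']]].
- exists G, (r ** w ** e); split => //.
  + by exists x0.
  + by exists (r ** w).
  + by exists (r' ** y); rewrite -{1}Er' !mmulA.
  + by rewrite Em !mmulA.
- apply: (IH (G ** r)) => //.
  + by exists (x0 ** r); rewrite EG !mmulA.
  + by exists s'.
  + by rewrite Em !mmulA.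
Qed.

Lemma back_L (M : finMonoid) (e f m : M) : idem e -> hom e f m -> inL e m -> AIrr e f m.
Proof.
move=> ie hm [t Et]; split => // k g h ik _ [y Eh] Emgh; left.
exists (e ** t ** g ** k); split; first by exists (t ** g); rewrite !mmulA.
have kh : k ** h = h by rewrite Eh !mmulA ik.
rewrite -mmulA kh; transitivity (e ** (t ** (g ** h))); first by rewrite !mmulA.
by rewrite -Emgh -Et ie.
Qed.

Lemma back_R (M : finMonoid) (e f m : M) : idem f -> hom e f m -> inR f m -> AIrr e f m.
Proof.
move=> if_ hm [t Et]; split => // k g h ik [y Eg] _ Emgh; right.
exists (k ** h ** t ** f); split; first by exists (h ** t); rewrite !mmulA.
have gk : g ** k = g by rewrite Eg -mmulA ik.
transitivity (g ** k ** h ** t ** f); first by rewrite !mmulA.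
by rewrite gk -Emgh -Et if_.
Qed.

Lemma hom_LR (M : finMonoid) (e f m : M) : idem e -> idem f -> hom e f m -> inL m e /\ inR m f.
Proof. move=> ie if_ [x ->]; split; [by exists (f ** x)|by exists (x ** e); rewrite mmulA]. Qed.

Theorem mainTheorem18 (M : finMonoid) (e f : M) :
  rectangular M -> gen_by_regular M -> idem e -> idem f ->
  [/\ (* (1) MeM and MfM incomparable *)
      (~~ (jideal e \subset jideal f) -> ~~ (jideal f \subset jideal e) ->
        forall m : M, (AIrr e f m <-> Irr e f m) /\
          (AIrr e f m -> exists a b : M,
             [/\ lideal a = lideal e, rideal b = rideal f & m = mmul b a])),
      (* (2) MeM strictly contained in MfM *)
      (jideal e \proper jideal f ->
        forall m : M, AIrr e f m <-> (hom e f m /\ lideal m = lideal e)),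
      (* (3) MfM strictly contained in MeM *)
      (jideal f \proper jideal e ->
        forall m : M, AIrr e f m <-> (hom e f m /\ rideal m = rideal f))
    & (* (4) *)
      (forall m : M, AIrr e e m <-> Ge e m)].
Proof.
move=> rect gen ie if_; have R := rectJP rect.
split.
- move=> nef nfe m; split.
  + split; last by case.
    move=> A; split => //; split.
    * case=> r [_ Er]; move/negP: nef; apply; apply/sub_jideal.
      case: A => [[x Ex] _]; exists r, (x ** e); by rewrite -{1}Er Ex !mmulA.
    * case=> s [_ Es]; move/negP: nfe; apply; apply/sub_jideal.
      case: A => [[x Ex] _]; exists (f ** x), s; by rewrite -{1}Es Ex.
  + move=> A; have [G [H [G1 G2 H1 H2 E]]] := key gen A.
    exists H, G; split => //; [exact/eq_lideal|exact/eq_rideal].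
- rewrite properE => /andP [/sub_jideal Jef _] m; split.
  + move=> A; have [G [H [G1 G2 H1 H2 E]]] := key gen A.
    split; first by case: A.
    apply/eq_lideal; split; first by case: (hom_LR ie if_ (proj1 A)).
    by rewrite E; apply: (left_core R ie if_).
  + by case=> hm /eq_lideal [_ L]; apply: back_L.
- rewrite properE => /andP [/sub_jideal Jfe _] m; split.
  + move=> A; have [G [H [G1 G2 H1 H2 E]]] := key gen A.
    split; first by case: A.
    apply/eq_rideal; split; first by case: (hom_LR ie if_ (proj1 A)).
    by rewrite E; apply: (right_core R ie if_).
  + by case=> hm /eq_rideal [_ L]; apply: back_R.
- move=> m; split.
  + move=> A; have [G [H [G1 G2 H1 H2 E]]] := key gen A.
    have [t Et] : inL e m by rewrite E; apply: (left_core R ie ie) => //; exact: inJ_refl.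
    have [t' Et'] : inR e m by rewrite E; apply: (right_core R ie ie) => //; exact: inJ_refl.
    have hm := proj1 A; split => //.
    have [y Ey] := hm.
    have me : m ** e = m by rewrite Ey -mmulA ie.
    have em : e ** m = m by rewrite Ey !mmulA ie.
    have xl : e ** t ** e ** m = e by rewrite -mmulA em -mmulA -Et ie.
    have xr : m ** (e ** t' ** e) = e by rewrite !mmulA me -Et' ie.
    have exy : e ** t ** e = e ** t' ** e.
      have xLe : e ** t ** e ** e = e ** t ** e by rewrite -mmulA ie.
      have exR : e ** (e ** t' ** e) = e ** t' ** e by rewrite !mmulA ie.
      transitivity (e ** t ** e ** (m ** (e ** t' ** e))); first by rewrite xr xLe.
      by rewrite mmulA xl exR.
    exists (e ** t ** e); split; first by exists t.
    by split => //; rewrite exy.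
  + case=> hm [x [[z Ex] [E1 E2]]]; apply: back_R => //.
    by exists x.
Qed.
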